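(* Let $(t^\ell)_{\ell\in\mathbb{N}}$ be a sequence of positive numbers with $t^\ell\to0$. Suppose that for each $\ell$, $x^\ell\in M_{t^\ell}$ is a Karush-Kuhn-Tucker point of $\mathrm{MPOC}_{t^\ell}$, and that $x^\ell\to\bar x$. If $\bar x\in M$ and LICQ holds at $\bar x$, then $\bar x$ is a T-stationary point of MPOC.
   Context: MPOC: minimize $f(x)$ subject to $x\in M=\{x\in\mathbb{R}^n \mid h_i(x)=0,\ i\in I;\ g_j(x)\ge 0,\ j\in J;\ F_{1,m}(x)F_{2,m}(x)=0,\ F_{2,m}(x)\ge 0,\ m=1,\dots,k\}$, all functions $C^2$, $I,J$ finite. For $t>0$, the Scholtes-type regularization $\mathrm{MPOC}_t$ is the nonlinear program: minimize $f(x)$ subject to $x\in M_t=\{x\mid h_i(x)=0\ (i\in I),\ g_j(x)\ge0\ (j\in J),\ -t\le F_{1,m}(x)F_{2,m}(x)\le t,\ F_{2,m}(x)\ge0\ (m=1,\dots,k)\}$; a KKT point is a feasible point satisfying the standard Karush-Kuhn-Tucker conditions for this smooth program (gradient of $f$ equals a combination of constraint gradients with nonnegative multipliers for inequality constraints and complementary slackness). Index sets at $\bar x\in M$: $J_0(\bar x)=\{j\mid g_j(\bar x)=0\}$, $a_{00}(\bar x)=\{m\mid F_{1,m}(\bar x)=0=F_{2,m}(\bar x)\}$, $a_{01}(\bar x)=\{m\mid F_{1,m}(\bar x)=0,F_{2,m}(\bar x)>0\}$, $a_{10}(\bar x)=\{m\mid F_{1,m}(\bar x)\ne0,F_{2,m}(\bar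 x)=0\}$. LICQ at $\bar x$: $Dh_i(\bar x)$ ($i\in I$), $Dg_j(\bar x)$ ($j\in J_0(\bar x)$), $DF_{1,m}(\bar x)$ ($m\in a_{01}\cup a_{00}$), $DF_{2,m}(\bar x)$ ($m\in a_{10}\cup a_{00}$) linearly independent. T-stationary point: $\bar x\in M$ with multipliers $\bar\lambda_i,\bar\mu_j$ ($j\in J_0(\bar x)$), $\bar\sigma_{1,m}$ ($m\in a_{01}$), $\bar\sigma_{2,m}$ ($m\in a_{10}$), $\bar\varrho_{1,m},\bar\varrho_{2,m}$ ($m\in a_{00}$) such that $Df(\bar x)=\sum_{I}\bar\lambda_iDh_i+\sum_{J_0}\bar\mu_jDg_j+\sum_{a_{01}}\bar\sigma_{1,m}DF_{1,m}+\sum_{a_{10}}\bar\sigma_{2,m}DF_{2,m}+\sum_{a_{00}}(\bar\varrho_{1,m}DF_{1,m}+\bar\varrho_{2,m}DF_{2,m})$ (at $\bar x$), $\bar\mu_j\ge0$, and $\bar\varrho_{1,m}=0$ or $\bar\varrho_{2,m}\le0$ for each $m\in a_{00}(\bar x)$. *)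

(* Defs.v *)
From HB Require Import structures.
From mathcomp Require Import all_boot all_order all_algebra.
From mathcomp Require Import all_classical all_reals all_analysis.
Set Implicit Arguments. Unset Strict Implicit. Unset Printing Implicit Defensive.
Import Order.TTheory GRing.Theory Num.Theory.
Import numFieldNormedType.Exports.
Local Open Scope ring_scope.
Local Open Scope classical_set_scope.

Section MPOC.
Variable R : realType.
Variable n : nat.

Definition ej (i : 'I_n) : 'rV[R]_n := delta_mx 0 i.

Definition pd (f : 'rV[R]_n -> R) (i : 'I_n) : 'rV[R]_n -> R :=
  fun x => derive f x (ej i).

Definition C1 (f : 'rV[R]_n -> R) : Prop :=
  forall i, (forall x, derivable f x (ej i)) /\ continuous (pd f i).

Definition C2 (f : 'rV[R]_n -> R) : Prop :=
  C1 f /\ forall i, C1 (pd f i).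

Definition grad (f : 'rV[R]_n -> R) (x : 'rV[R]_n) : 'rV[R]_n :=
  \row_i pd f i x.

Variables (p q k : nat).
Variables (f : 'rV[R]_n -> R) (h : 'I_p -> 'rV[R]_n -> R)
  (g : 'I_q -> 'rV[R]_n -> R) (F1 F2 : 'I_k -> 'rV[R]_n -> R).

Definition feasM (x : 'rV[R]_n) : Prop :=
  (forall i, h i x = 0) /\ (forall j, 0 <= g j x) /\
  (forall m, F1 m x * F2 m x = 0 /\ 0 <= F2 m x).

Definition feasMt (t : R) (x : 'rV[R]_n) : Prop :=
  (forall i, h i x = 0) /\ (forall j, 0 <= g j x) /\
  (forall m, - t <= F1 m x * F2 m x /\ F1 m x * F2 m x <= t /\ 0 <= F2 m x).

(* KKT point of the smooth program MPOC_t, whose inequality constraints are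
   g_j >= 0, t - F1 F2 >= 0, F1 F2 + t >= 0, F2 >= 0 *)
Definition KKT_t (t : R) (x : 'rV[R]_n) : Prop :=
  feasMt t x /\
  exists (lam : 'I_p -> R) (mu : 'I_q -> R) (al be ga : 'I_k -> R),
    (forall j, 0 <= mu j /\ mu j * g j x = 0) /\
    (forall m, 0 <= al m /\ al m * (t - F1 m x * F2 m x) = 0) /\
    (forall m, 0 <= be m /\ be m * (F1 m x * F2 m x + t) = 0) /\
    (forall m, 0 <= ga m /\ ga m * F2 m x = 0) /\
    grad f x =
      \sum_(i < p) lam i *: grad (h i) x
    + \sum_(j < q) mu j *: grad (g j) x
    + \sum_(m < k) (al m *: grad (fun y => t - F1 m y * F2 m y) x
                    + be m *: grad (fun y => F1 m y * F2 m y + t) x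
                    + ga m *: grad (F2 m) x).

Definition J0 (x : 'rV[R]_n) (j : 'I_q) : bool := g j x == 0.
Definition a00 (x : 'rV[R]_n) (m : 'I_k) : bool := (F1 m x == 0) && (F2 m x == 0).
Definition a01 (x : 'rV[R]_n) (m : 'I_k) : bool := (F1 m x == 0) && (0 < F2 m x).
Definition a10 (x : 'rV[R]_n) (m : 'I_k) : bool := (F1 m x != 0) && (F2 m x == 0).

Definition LICQ (x : 'rV[R]_n) : Prop :=
  free ([seq grad (h i) x | i <- enum 'I_p]
     ++ [seq grad (g j) x | j <- enum 'I_q & J0 x j]
     ++ [seq grad (F1 m) x | m <- enum 'I_k & a01 x m || a00 x m]
     ++ [seq grad (F2 m) x | m <- enum 'I_k & a10 x m || a00 x m]).

Definition Tstationary (x : 'rV[R]_n) : Prop :=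
  feasM x /\
  exists (lam : 'I_p -> R) (mu : 'I_q -> R) (s1 s2 r1 r2 : 'I_k -> R),
    grad f x =
      \sum_(i < p) lam i *: grad (h i) x
    + \sum_(j < q | J0 x j) mu j *: grad (g j) x
    + \sum_(m < k | a01 x m) s1 m *: grad (F1 m) x
    + \sum_(m < k | a10 x m) s2 m *: grad (F2 m) x
    + \sum_(m < k | a00 x m) (r1 m *: grad (F1 m) x + r2 m *: grad (F2 m) x)
    /\ (forall j, J0 x j -> 0 <= mu j)
    /\ (forall m, a00 x m -> r1 m = 0 \/ r2 m <= 0).

End MPOC.

(* Main.v *)
Require Import Defs.
From HB Require Import structures.
From mathcomp Require Import all_boot all_order all_algebra.
From mathcomp Require Import all_classical all_reals all_analysis.
Import Order.TTheory GRing.Theory Num.Theory.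
Import numFieldNormedType.Exports.
Local Open Scope ring_scope.
Local Open Scope classical_set_scope.
From mathcomp Require Import ring lra.

Section Aux.
Variable R : realType.

Lemma cvg_bsum (I : Type) (r : seq I) (P : pred I) (u : I -> nat -> R) (a : I -> R) :
  (forall i, P i -> u i @ \oo --> a i) ->
  (fun l => \sum_(i <- r | P i) u i l) @ \oo --> \sum_(i <- r | P i) a i.
Proof.
move=> H; elim: r => [|x r IH].
  have -> : (fun l => \sum_(i <- [::] | P i) u i l) = cst 0.
    by apply/funext => l; rewrite big_nil.
  by rewrite big_nil; exact: cvg_cst.
have -> : (fun l => \sum_(i <- x :: r | P i) u i l) =
   (fun l => (if P x then u x l else 0) + \sum_(i <- r | P i) u i l).
  by apply/funext => l; rewrite big_cons; case: (P x); rewrite ?add0r.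
rewrite big_cons; case Px: (P x) => /=.
  exact: cvgD (H _ Px) IH.
rewrite -[X in _ --> X]add0r; apply: cvgD => //; exact: cvg_cst.
Qed.

Lemma cvg_bprod (I : Type) (r : seq I) (P : pred I) (u : I -> nat -> R) (a : I -> R) :
  (forall i, P i -> u i @ \oo --> a i) ->
  (fun l => \prod_(i <- r | P i) u i l) @ \oo --> \prod_(i <- r | P i) a i.
Proof.
move=> H; elim: r => [|x r IH].
  have -> : (fun l => \prod_(i <- [::] | P i) u i l) = cst 1.
    by apply/funext => l; rewrite big_nil.
  by rewrite big_nil; exact: cvg_cst.
have -> : (fun l => \prod_(i <- x :: r | P i) u i l) =
   (fun l => (if P x then u x l else 1) * \prod_(i <- r | P i) u i l).
  by apply/funext => l; rewrite big_cons; case: (P x); rewrite ?mul1r.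
rewrite big_cons; case Px: (P x) => /=.
  exact: cvgM (H _ Px) IH.
rewrite -[X in _ --> X]mul1r; apply: cvgM => //; exact: cvg_cst.
Qed.

Lemma cvg_det N (M : nat -> 'M[R]_N) (M0 : 'M[R]_N) :
  (forall i j, (fun l => M l i j) @ \oo --> M0 i j) ->
  (fun l => \det (M l)) @ \oo --> \det M0.
Proof.
move=> H; rewrite /determinant.
apply: cvg_bsum => s _; apply: cvgM; first exact: cvg_cst.
by apply: cvg_bprod => i _; exact: H.
Qed.

Lemma cvg_mulmx_r m N n (A : nat -> 'M[R]_(m,N)) (A0 : 'M[R]_(m,N)) (B : 'M[R]_(N,n)) :
  (forall i j, (fun l => A l i j) @ \oo --> A0 i j) ->
  forall i j, (fun l => (A l *m B) i j) @ \oo --> (A0 *m B) i j.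
Proof.
move=> H i j; rewrite mxE; under eq_fun do rewrite mxE.
apply: cvg_bsum => k _; apply: cvgM; [exact: H| exact: cvg_cst].
Qed.
Lemma cvg_adj N (M : nat -> 'M[R]_N) (M0 : 'M[R]_N) :
  (forall i j, (fun l => M l i j) @ \oo --> M0 i j) ->
  forall i j, (fun l => \adj (M l) i j) @ \oo --> \adj M0 i j.
Proof.
move=> HM i j; rewrite mxE /cofactor; under eq_fun do rewrite mxE /cofactor.
apply: cvgM; first exact: cvg_cst.
apply: (cvg_det _ (fun l => row' j (col' i (M l)))) => a a'.
rewrite !mxE; under eq_fun do rewrite !mxE; exact: HM.
Qed.
Lemma cvg_mulmx m N n (C : nat -> 'M[R]_(m,N)) (C0 : 'M[R]_(m,N)) (A : nat -> 'M[R]_(N,n)) (A0 : 'M[R]_(N,n)) :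
  (forall i j, (fun l => C l i j) @ \oo --> C0 i j) ->
  (forall i j, (fun l => A l i j) @ \oo --> A0 i j) ->
  forall i j, (fun l => (C l *m A l) i j) @ \oo --> (C0 *m A0) i j.
Proof.
move=> HC HA i j; rewrite mxE; under eq_fun do rewrite mxE.
apply: cvg_bsum => k _; apply: cvgM; [exact: HC| exact: HA].
Qed.
Lemma core N n (A : nat -> 'M[R]_(N,n)) (Ab : 'M[R]_(N,n)) (c : nat -> 'rV[R]_N)
  (b : nat -> 'rV[R]_n) (bb : 'rV[R]_n) :
  row_free Ab ->
  (forall i j, (fun l => A l i j) @ \oo --> Ab i j) ->
  (forall j, (fun l => b l 0 j) @ \oo --> bb 0 j) ->
  (\forall l \near \oo, b l = c l *m A l) ->
  exists cb : 'rV[R]_N, (forall i, (fun l => c l 0 i) @ \oo --> cb 0 i) /\ bb = cb *m Ab.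
Proof.
move=> /row_freeP [B AB] HA Hb Hc.
pose M := fun l => A l *m B.
have HM : forall i j, (fun l => M l i j) @ \oo --> (1%:M : 'M[R]_N) i j.
  by rewrite -AB; apply: cvg_mulmx_r.
have Hd : forall i j, (fun l => (b l *m B) i j) @ \oo --> (bb *m B) i j.
  apply: cvg_mulmx_r => i j; by rewrite (ord1 i); apply: Hb.
have Hdet := cvg_det _ _ _ HM; rewrite det1 in Hdet.
have ev : \forall l \near \oo, \det (M l) != 0.
  by apply: (cvgr_neq0 _ Hdet); exact: oner_neq0.
have Hadj := cvg_adj _ _ _ HM.
pose cb : 'rV[R]_N := \row_i \sum_j (bb *m B) 0 j * (1^-1 * \adj (1%:M : 'M[R]_N) j i).
have Hcb : forall i, (fun l => c l 0 i) @ \oo --> cb 0 i.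
  move=> i; rewrite mxE.
  apply: cvg_trans (_ : (fun l => \sum_j (b l *m B) 0 j * ((\det (M l))^-1 * \adj (M l) j i)) @ \oo --> _).
    apply: near_eq_cvg; near=> l.
    have Mu : M l \in unitmx by rewrite unitmxE unitfE; near: l; exact: ev.
    have Hcl : b l = c l *m A l by near: l; exact: Hc.
    have -> : c l = (b l *m B) *m invmx (M l).
      by rewrite Hcl -2!mulmxA (mulmxA (A l)) -/(M l) mulmxV // mulmx1.
    rewrite [RHS]mxE /invmx Mu /=; apply: eq_bigr => j _; by rewrite !mxE.
  apply: cvg_bsum => j _; apply: cvgM; first exact: Hd.
  apply: cvgM; last exact: Hadj.
  exact: cvgV (oner_neq0 _) Hdet.
exists cb; split => //.
apply/rowP => j.
have H1 : (fun l => b l 0 j) @ \oo --> (cb *m Ab) 0 j.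
  apply: cvg_trans (_ : (fun l => (c l *m A l) 0 j) @ \oo --> _).
    apply: near_eq_cvg; near=> l.
    have Hcl : b l = c l *m A l by near: l; exact: Hc.
    by rewrite Hcl.
  apply: cvg_mulmx => // i0 j0; rewrite (ord1 i0); exact: Hcb.
exact: (cvg_unique _ (Hb j) H1).
Unshelve. all: by end_near.
Qed.
Lemma dir_is_derive n (f : 'rV[R]_n -> R) (y v : 'rV[R]_n) (r : R) :
  derivable f (y + r *: v) v ->
  is_derive r 1 (fun s => f (y + s *: v)) ('D_v f (y + r *: v)).
Proof.
move=> df.
have E : (fun h : R => h^-1 *: (((fun s => f (y + s *: v)) \o shift r) (h *: 1) - f (y + r *: v)))
   = (fun h => h^-1 *: ((f \o shift (y + r *: v)) (h *: v) - f (y + r *: v))).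
  apply/funext => h /=; congr (_ *: (f _ - _)).
  rewrite [h *: 1]mulr1 scalerDl addrCA addrC; done.
apply: DeriveDef; first by rewrite /derivable E.
by rewrite /derive E.
Qed.
Lemma mvt_coord n (f : 'rV[R]_n -> R) (k : 'I_n) (y : 'rV[R]_n) (s : R) :
  (forall x, derivable f x (ej R k)) ->
  exists c : R, `|c| <= `|s| /\ f (y + s *: ej R k) - f y = s * pd f k (y + c *: ej R k).
Proof.
move=> D.
pose phi := fun s : R => f (y + s *: ej R k).
have dphi : forall r : R, is_derive r (1:R) phi (pd f k (y + r *: ej R k)).
  move=> r; exact: (dir_is_derive _ _ _ _ _ (D _)).
have cphi : forall a b, {within `[a, b], continuous phi}.
  move=> a b; apply: derivable_within_continuous => x _.
  by have [] := dphi x.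
case: (leP 0 s) => hs.
  have [c cin E] := MVT_segment hs (fun x _ => dphi x) (cphi 0 s).
  exists c; split.
    move: cin; rewrite in_itv /= => /andP[c0 cs].
    by rewrite !ger0_norm // (le_trans c0 cs).
  by move: E; rewrite /phi scale0r addr0 subr0 mulrC.
have [c cin E] := MVT_segment (ltW hs) (fun x _ => dphi x) (cphi s 0).
exists c; split.
  move: cin; rewrite in_itv /= => /andP[sc c0].
  by rewrite !ler0_norm ?lerN2 // ltW.
move: E; rewrite /phi scale0r addr0 sub0r mulrN => E.
by rewrite -opprB E opprK mulrC.
Qed.
Lemma mx_coord_le m n (M : 'M[R]_(m,n)) i j : `|M i j| <= `|M|.
Proof.
rewrite [leRHS]/Num.Def.normr /= mx_normrE.
exact: (le_bigmax _ _ (i, j)).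
Qed.

Lemma mx_norm_le m n (M N : 'M[R]_(m,n)) :
  (forall i j, `|M i j| <= `|N i j|) -> `|M| <= `|N|.
Proof.
move=> H; rewrite [leLHS]/Num.Def.normr /= mx_normrE.
apply: bigmax_le => // -[i j] _ /=.
apply: (le_trans (H i j)); exact: mx_coord_le.
Qed.

Lemma cvg_dom (V W : normedModType R) (u : nat -> V) (v : nat -> W) a b :
  v @ \oo --> b -> (forall l, `|u l - a| <= `|v l - b|) -> u @ \oo --> a.
Proof.
move=> /cvgrPdist_le Hv H; apply/cvgrPdist_le => e e0.
have := Hv e e0; apply: filterS => l hl.
by rewrite distrC (le_trans (H l)) // distrC.
Qed.

Lemma cvg_coord m n (x : nat -> 'M[R]_(m,n)) (xb : 'M[R]_(m,n)) :
  x @ \oo --> xb -> forall i j, (fun l => x l i j) @ \oo --> xb i j.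
Proof.
move=> Hx i j; apply: (cvg_dom _ _ _ _ _ _ Hx) => l.
by rewrite (le_trans _ (mx_coord_le _ _ (x l - xb) i j)) // !mxE.
Qed.
Definition upath n (x z : 'rV[R]_n) (k : nat) : 'rV[R]_n :=
  \row_i (if (i < k)%N then z 0 i else x 0 i).

Arguments upath {n}.

Lemma upath_step n (x z : 'rV[R]_n) (k : 'I_n) :
  upath x z k.+1 = upath x z k + (z 0 k - x 0 k) *: ej R k.
Proof.
apply/rowP => i; rewrite !mxE eqxx /= ltnS.
case: (ltngtP i k) => [h|h|h].
- by rewrite (_ : (i == k) = false) ?mulr0 ?addr0 // -val_eqE /= ltn_eqF.
- by rewrite (_ : (i == k) = false) ?mulr0 ?addr0 // -val_eqE /= gtn_eqF.
- have ik : i = k by apply: val_inj.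
  by rewrite ik eqxx mulr1 addrC subrK.
Qed.
Lemma telescope_pd n (f : 'rV[R]_n -> R) (D : forall k x, derivable f x (ej R k))
  (x z : 'rV[R]_n) :
  exists cs : 'I_n -> R, (forall k, `|cs k| <= `|z 0 k - x 0 k|) /\
   f z - f x = \sum_k (z 0 k - x 0 k) * pd f k (upath x z k + cs k *: ej R k).
Proof.
have /choice [cs Hcs] : forall k : 'I_n, exists c : R, `|c| <= `|z 0 k - x 0 k| /\
    f (upath x z k + (z 0 k - x 0 k) *: ej R k) - f (upath x z k)
     = (z 0 k - x 0 k) * pd f k (upath x z k + c *: ej R k).
  move=> k; exact: mvt_coord (D k).
exists cs; split; first by move=> k; case: (Hcs k).
have Ez : f z = f (upath x z n) by congr f; apply/rowP => i; rewrite mxE ltn_ord.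
have Ex : f x = f (upath x z 0) by congr f; apply/rowP => i; rewrite mxE.
rewrite Ez Ex -(@telescope_sumr _ 0 n (fun k => f (upath x z k)) (leq0n n)) big_mkord.
by apply: eq_bigr => k _; rewrite upath_step; case: (Hcs k).
Qed.
Lemma seq_cont n (f : 'rV[R]_n -> R) (Cf : C1 f) (x : nat -> 'rV[R]_n) (xb : 'rV[R]_n) :
  x @ \oo --> xb -> (fun l => f (x l)) @ \oo --> f xb.
Proof.
move=> Hx.
have D : forall k y, derivable f y (ej R k) := fun k => (Cf k).1.
have /choice [cs Hcs] := fun l => telescope_pd _ f D xb (x l).
pose w := fun l (k : 'I_n) => upath xb (x l) k + cs l k *: ej R k.
have Hw : forall k, (fun l => w l k) @ \oo --> xb.
  move=> k; apply: (cvg_dom _ _ _ _ _ _ Hx) => l.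
  apply: mx_norm_le => i j; rewrite (ord1 i) !mxE eqxx /=.
  case: (ltngtP j k) => h.
  - by rewrite (_ : (j == k) = false) ?mulr0 ?addr0 // -val_eqE /= ltn_eqF.
  - by rewrite (_ : (j == k) = false) ?mulr0 ?addr0 ?subrr ?normr0 // -val_eqE /= gtn_eqF.
  - have jk : j = k by apply: val_inj.
    by rewrite jk eqxx mulr1 addrC addKr; case: (Hcs l) => + _; apply.
have E : (fun l => f (x l)) = (fun l => f xb + \sum_k (x l 0 k - xb 0 k) * pd f k (w l k)).
  by apply/funext => l; case: (Hcs l) => _ <-; rewrite addrC subrK.
rewrite E -[X in _ --> X]addr0; apply: cvgD; first exact: cvg_cst.
have H0 : (fun l => \sum_k (x l 0 k - xb 0 k) * pd f k (w l k)) @ \oo --> \sum_(k < n) (0:R) * pd f k xb.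
  apply: cvg_bsum => k _; apply: cvgM.
    rewrite -(subrr (xb 0 k)); apply: cvgB; [exact: (cvg_coord _ _ _ _ Hx 0 k) | exact: cvg_cst].
  exact: (@continuous_cvg _ _ _ _ _ (fun l => w l k) (pd f k) xb ((Cf k).2 xb) (Hw k)).
by rewrite big1 in H0 => // k _; rewrite mul0r.
Qed.
Lemma grad_tmprod n (F1 F2 : 'rV[R]_n -> R) (t : R) (x : 'rV[R]_n) :
  C1 F1 -> C1 F2 ->
  grad (fun y => t - F1 y * F2 y) x = - (F1 x *: grad F2 x + F2 x *: grad F1 x).
Proof.
move=> C1 C2; apply/rowP => i; rewrite !mxE /pd.
have -> : (fun y => t - F1 y * F2 y) = cst t - F1 * F2 by apply/funext.
rewrite deriveB; [|exact: derivable_cst|apply: derivableM; [exact: (C1 i).1|exact: (C2 i).1]].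
rewrite derive_cst sub0r deriveM; [|exact: (C1 i).1|exact: (C2 i).1].
by [].
Qed.

Lemma grad_prodpt n (F1 F2 : 'rV[R]_n -> R) (t : R) (x : 'rV[R]_n) :
  C1 F1 -> C1 F2 ->
  grad (fun y => F1 y * F2 y + t) x = F1 x *: grad F2 x + F2 x *: grad F1 x.
Proof.
move=> C1 C2; apply/rowP => i; rewrite !mxE /pd.
have -> : (fun y => F1 y * F2 y + t) = F1 * F2 + cst t by apply/funext.
rewrite deriveD; [|apply: derivableM; [exact: (C1 i).1|exact: (C2 i).1]|exact: derivable_cst].
rewrite derive_cst addr0 deriveM; [|exact: (C1 i).1|exact: (C2 i).1].
by [].
Qed.
Lemma map_mapE (A B C : Type) (f : B -> C) (g : A -> B) (s : seq A) :
  map f (map g s) = map (fun a => f (g a)) s.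
Proof. by elim: s => //= a s ->. Qed.
Lemma cvg_ext (u v : nat -> R) (a : R) :
  (forall l, u l = v l) -> v @ \oo --> a -> u @ \oo --> a.
Proof. by move=> /funext ->. Qed.
Lemma mterm n (al be ga f1 f2 f1X f2X : R) (g1 g2 : 'rV[R]_n) :
  f1X * f2X = 0 -> 0 <= f2X -> ga * f2 = 0 ->
  ((f1X == 0) && (0 < f2X) -> f2 != 0) -> ((f1X != 0) && (f2X == 0) -> f1 != 0) ->
  al *: (- (f1 *: g2 + f2 *: g1)) + be *: (f1 *: g2 + f2 *: g1) + ga *: g2 =
  (if ((f1X == 0) && (0 < f2X)) || ((f1X == 0) && (f2X == 0))
   then ((be - al) * f2) *: (g1 + (if (f1X == 0) && (0 < f2X) then f1 / f2 else 0) *: g2) else 0)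
  + (if ((f1X != 0) && (f2X == 0)) || ((f1X == 0) && (f2X == 0))
   then ((be - al) * f1 + ga) *: (g2 + (if (f1X != 0) && (f2X == 0) then f2 / f1 else 0) *: g1) else 0).
Proof.
move=> hX hf2X hga H01 H10.
have hga' : ga = 0 \/ f2 = 0 by move/eqP: hga; rewrite mulf_eq0 => /orP[/eqP|/eqP]; [left|right].
case: (eqVneq f1X 0) => h1 /=.
  move: hf2X; rewrite le_eqVlt => /orP[/eqP h2|h2].
    rewrite -h2 eqxx ltxx /=.
    by apply/rowP => i; rewrite !mxE; ring.
  rewrite h2 (gt_eqF h2) /=.
  have f2n : f2 != 0 by apply: H01; rewrite h1 eqxx h2.
  have -> : ga = 0 by case: hga' => // /eqP; rewrite (negbTE f2n).
  apply/rowP => i; rewrite !mxE; field; done.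
have h2 : f2X = 0 by move/eqP: hX; rewrite mulf_eq0 (negbTE h1) => /eqP.
rewrite h2 eqxx /= add0r.
have f1n : f1 != 0 by apply: H10; rewrite h1 h2 eqxx.
case: hga' => ->; apply/rowP => i; rewrite !mxE; field; done.
Qed.
Lemma main_aux (n p q k : nat)
  (f : 'rV[R]_n -> R) (h : 'I_p -> 'rV[R]_n -> R)
  (g : 'I_q -> 'rV[R]_n -> R) (F1 F2 : 'I_k -> 'rV[R]_n -> R)
  (Cf : C2 f) (Ch : forall i, C2 (h i)) (Cg : forall j, C2 (g j))
  (CF1 : forall m, C2 (F1 m)) (CF2 : forall m, C2 (F2 m))
  (t : nat -> R) (x : nat -> 'rV[R]_n) (xbar : 'rV[R]_n) :
  (forall l, 0 < t l) ->
  (forall l, KKT_t f h g F1 F2 (t l) (x l)) ->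
  x @ \oo --> xbar ->
  feasM h g F1 F2 xbar ->
  LICQ h g F1 F2 xbar ->
  Tstationary f h g F1 F2 xbar.
Proof.
move=> tpos KKT Hx feas licq.
have /choice [lam H2] := fun l => (KKT l).2.
have /choice [mu H3] := H2.
have /choice [al H4] := H3.
have /choice [be H5] := H4.
have /choice [ga H6] := H5.
clear H2 H3 H4 H5.
have feasl := fun l => (KKT l).1.
set X := xbar.
have cF1 : forall m, (fun l => F1 m (x l)) @ \oo --> F1 m X.
  move=> m; exact: (seq_cont _ _ (CF1 m).1 _ _ Hx).
have cF2 : forall m, (fun l => F2 m (x l)) @ \oo --> F2 m X.
  move=> m; exact: (seq_cont _ _ (CF2 m).1 _ _ Hx).
have cg : forall j, (fun l => g j (x l)) @ \oo --> g j X.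
  move=> j; exact: (seq_cont _ _ (Cg j).1 _ _ Hx).
have cgrad : forall (F : 'rV[R]_n -> R), C1 F -> forall j, (fun l => grad F (x l) 0 j) @ \oo --> grad F X 0 j.
  move=> F CF j; rewrite mxE; under eq_fun do rewrite mxE.
  exact: (@continuous_cvg _ _ _ _ _ x (pd F j) X ((CF j).2 X) Hx).
pose nu l m := be l m - al l m.
pose CP l m := nu l m * F2 m (x l).
pose CQ l m := nu l m * F1 m (x l) + ga l m.
pose aP l m := grad (F1 m) (x l) + (if a01 F1 F2 X m then F1 m (x l) / F2 m (x l) else 0) *: grad (F2 m) (x l).
pose aQ l m := grad (F2 m) (x l) + (if a10 F1 F2 X m then F2 m (x l) / F1 m (x l) else 0) *: grad (F1 m) (x l).
pose vec l (tau : 'I_p + ('I_q + ('I_k + 'I_k))) : 'rV[R]_n :=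
  match tau with inl i => grad (h i) (x l) | inr (inl j) => grad (g j) (x l)
  | inr (inr (inl m)) => aP l m | inr (inr (inr m)) => aQ l m end.
pose vecX (tau : 'I_p + ('I_q + ('I_k + 'I_k))) : 'rV[R]_n :=
  match tau with inl i => grad (h i) X | inr (inl j) => grad (g j) X
  | inr (inr (inl m)) => grad (F1 m) X | inr (inr (inr m)) => grad (F2 m) X end.
pose coef l (tau : 'I_p + ('I_q + ('I_k + 'I_k))) : R :=
  match tau with inl i => lam l i | inr (inl j) => mu l j
  | inr (inr (inl m)) => CP l m | inr (inr (inr m)) => CQ l m end.
pose T : seq ('I_p + ('I_q + ('I_k + 'I_k))) :=
  [seq inl i | i <- enum 'I_p] ++ [seq inr (inl j) | j <- enum 'I_q & J0 g X j]
  ++ [seq inr (inr (inl m)) | m <- enum 'I_k & a01 F1 F2 X m || a00 F1 F2 X m]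
  ++ [seq inr (inr (inr m)) | m <- enum 'I_k & a10 F1 F2 X m || a00 F1 F2 X m].
pose tT := in_tuple T.
pose Ab := \matrix_(i < size T, j < n) vecX (tnth tT i) 0 j.
pose A l := \matrix_(i < size T, j < n) vec l (tnth tT i) 0 j.
pose c l := \row_(i < size T) coef l (tnth tT i).
pose b l := grad f (x l).
have Hfree : free (map vecX T).
  have <- : [seq grad (h i) X | i <- enum 'I_p] ++ [seq grad (g j) X | j <- enum 'I_q & J0 g X j]
     ++ [seq grad (F1 m) X | m <- enum 'I_k & a01 F1 F2 X m || a00 F1 F2 X m]
     ++ [seq grad (F2 m) X | m <- enum 'I_k & a10 F1 F2 X m || a00 F1 F2 X m] = map vecX T.
    by rewrite /T !map_cat; congr (_ ++ _ ++ _ ++ _); rewrite [RHS]map_mapE.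
  exact: licq.
have rowAb : forall i, row i Ab = vecX (tnth tT i).
  by move=> i; apply/rowP => j; rewrite !mxE.
have rfree : row_free Ab.
  apply: inj_row_free => v Hv.
  have /freeP /(_ (fun i => v 0 i)) H := (Hfree : free (map_tuple vecX tT)).
  apply/rowP => i; rewrite mxE; apply: H.
  apply: (etrans _ Hv); rewrite mulmx_sum_row; apply: eq_bigr => j _.
  by rewrite rowAb -tnth_map (tnth_nth 0).
have cpd : forall (F : 'rV[R]_n -> R), C1 F -> forall j, (fun l => pd F j (x l)) @ \oo --> pd F j X.
  move=> F CF j; exact: (@continuous_cvg _ _ _ _ _ x (pd F j) X ((CF j).2 X) Hx).
have HA : forall i j, (fun l => A l i j) @ \oo --> Ab i j.
  move=> i j; apply: (cvg_ext _ (fun l => vec l (tnth tT i) 0 j)) => [l|]; first by rewrite mxE.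
  rewrite mxE.
  case: (tnth tT i) => [a|[a|[a|a]]] /=.
  - rewrite mxE; under eq_fun do rewrite mxE; exact: cpd (Ch a).1 j.
  - rewrite mxE; under eq_fun do rewrite mxE; exact: cpd (Cg a).1 j.
  - rewrite mxE; apply: (cvg_ext _ (fun l => pd (F1 a) j (x l) + (if a01 F1 F2 X a then F1 a (x l) / F2 a (x l) else 0) * pd (F2 a) j (x l))).
      by move=> l; rewrite /aP !mxE.
    rewrite -[X in _ --> X]addr0; apply: cvgD; first exact: cpd (CF1 a).1 j.
    case E: (a01 F1 F2 X a).
      apply: (cvg_ext _ (fun l => F1 a (x l) / F2 a (x l) * pd (F2 a) j (x l))) => // .
      rewrite -(mul0r (pd (F2 a) j X)); apply: cvgM; last exact: cpd (CF2 a).1 j.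
      move: E; rewrite /a01 => /andP[/eqP E1 E2].
      rewrite -(mul0r (F2 a X)^-1) -E1; apply: cvgM; first exact: cF1.
      by apply: cvgV; [rewrite gt_eqF | exact: cF2].
    apply: (cvg_ext _ (fun _ => 0)) => [l|]; [by rewrite mul0r | exact: cvg_cst].
  - rewrite mxE; apply: (cvg_ext _ (fun l => pd (F2 a) j (x l) + (if a10 F1 F2 X a then F2 a (x l) / F1 a (x l) else 0) * pd (F1 a) j (x l))).
      by move=> l; rewrite /aQ !mxE.
    rewrite -[X in _ --> X]addr0; apply: cvgD; first exact: cpd (CF2 a).1 j.
    case E: (a10 F1 F2 X a).
      apply: (cvg_ext _ (fun l => F2 a (x l) / F1 a (x l) * pd (F1 a) j (x l))) => // .
      rewrite -(mul0r (pd (F1 a) j X)); apply: cvgM; last exact: cpd (CF1 a).1 j.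
      move: E; rewrite /a10 => /andP[E1 /eqP E2].
      rewrite -(mul0r (F1 a X)^-1) -E2; apply: cvgM; first exact: cF2.
      by apply: cvgV; [exact: E1 | exact: cF1].
    apply: (cvg_ext _ (fun _ => 0)) => [l|]; [by rewrite mul0r | exact: cvg_cst].
have Hb : forall j, (fun l => b l 0 j) @ \oo --> grad f X 0 j.
  move=> j; apply: (cvg_ext _ (fun l => pd f j (x l))) => [l|]; first by rewrite mxE.
  rewrite mxE; exact: cpd Cf.1 j.
have ev1 : \forall l \near \oo, forall j, ~~ J0 g X j -> mu l j = 0.
  apply: filter_forall => j.
  case E: (J0 g X j); first by apply: nearW.
  have gne : g j X != 0 by move: E; rewrite /J0 => /negbT.
  near=> l => _.
  have gl : g j (x l) != 0 by near: l; exact: (cvgr_neq0 _ (cg j) gne).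
  have [Hmu _] := H6 l; have [_ /eqP] := Hmu j.
  by rewrite mulf_eq0 (negbTE gl) orbF => /eqP.
have ev2 : \forall l \near \oo, forall m, a01 F1 F2 X m -> F2 m (x l) != 0.
  apply: filter_forall => m.
  case E: (a01 F1 F2 X m); last by apply: nearW.
  move: E; rewrite /a01 => /andP[_ E2].
  near=> l => _; near: l; exact: (cvgr_neq0 _ (cF2 m) (lt0r_neq0 E2)).
have ev3 : \forall l \near \oo, forall m, a10 F1 F2 X m -> F1 m (x l) != 0.
  apply: filter_forall => m.
  case E: (a10 F1 F2 X m); last by apply: nearW.
  move: E; rewrite /a10 => /andP[E1 _].
  near=> l => _; near: l; exact: (cvgr_neq0 _ (cF1 m) E1).
have Heq : \forall l \near \oo, b l = c l *m A l.
  near=> l.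
  have E1 : forall j, ~~ J0 g X j -> mu l j = 0 by near: l; exact: ev1.
  have E2 : forall m, a01 F1 F2 X m -> F2 m (x l) != 0 by near: l; exact: ev2.
  have E3 : forall m, a10 F1 F2 X m -> F1 m (x l) != 0 by near: l; exact: ev3.
  have [Hmu [Hal [Hbe [Hga Hgrad]]]] := H6 l.
  have -> : c l *m A l = \sum_(tau <- tT) coef l tau *: vec l tau.
    rewrite mulmx_sum_row big_tuple; apply: eq_bigr => i _.
    rewrite mxE; congr (_ *: _); apply/rowP => j; rewrite !mxE.
    done.
  rewrite /b Hgrad /= !big_cat !big_map !big_filter /= !big_enum_cond /=.
  rewrite -!addrA; congr (_ + _); congr (_ + _).
    rewrite (bigID (J0 g X)) /= [X in _ + X]big1 ?addr0 // => j nj.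
    by rewrite E1 // scale0r.
  rewrite [in RHS]big_mkcond [X in _ = _ + X]big_mkcond -big_split /=.
  apply: eq_bigr => m _.
  rewrite grad_tmprod ?grad_prodpt; try exact: (CF1 m).1; try exact: (CF2 m).1.
  have [fe1 fe2] := feas.2.2 m.
  apply: mterm => //; [exact: (Hga m).2 | exact: E2 | exact: E3].
have [cb [Hcb Ecb]] := core _ _ A Ab c b (grad f X) rfree HA Hb Heq.
pose cbf tau := lim ((fun l => coef l tau) @ \oo).
have Hci : forall i, (fun l => coef l (tnth tT i)) @ \oo --> cb 0 i.
  move=> i; apply: (cvg_ext _ (fun l => c l 0 i)) => [l|]; first by rewrite mxE.
  exact: Hcb.
have cbE : forall i, cbf (tnth tT i) = cb 0 i.
  by move=> i; rewrite /cbf (cvg_lim _ (Hci i)).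
have Hcoef : forall tau, tau \in T -> (fun l => coef l tau) @ \oo --> cbf tau.
  move=> tau /(tnthP tT) [i ->]; rewrite cbE; exact: Hci.
have memG : forall j, J0 g X j -> inr (inl j) \in T.
  move=> j hj; rewrite /T !mem_cat; apply/orP; right; apply/orP; left.
  by apply: map_f; rewrite mem_filter hj mem_enum.
have memP : forall m, a00 F1 F2 X m -> inr (inr (inl m)) \in T.
  move=> m hm; rewrite /T !mem_cat; apply/orP; right; apply/orP; right; apply/orP; left.
  by apply: map_f; rewrite mem_filter hm orbT mem_enum.
have memQ : forall m, a00 F1 F2 X m -> inr (inr (inr m)) \in T.
  move=> m hm; rewrite /T !mem_cat; apply/orP; right; apply/orP; right; apply/orP; right.
  by apply: map_f; rewrite mem_filter hm orbT mem_enum.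
split; first exact: feas.
exists (fun i => cbf (inl i)), (fun j => cbf (inr (inl j))),
  (fun m => cbf (inr (inr (inl m)))), (fun m => cbf (inr (inr (inr m)))),
  (fun m => cbf (inr (inr (inl m)))), (fun m => cbf (inr (inr (inr m)))).
split; [|split].
- have -> : grad f X = \sum_(tau <- tT) cbf tau *: vecX tau.
    rewrite Ecb mulmx_sum_row big_tuple; apply: eq_bigr => i _.
    by rewrite rowAb cbE.
  rewrite !big_cat !big_map !big_filter /= !big_enum_cond /=.
  rewrite -!addrA; congr (_ + _); congr (_ + _).
  rewrite [X in X + _ = _]big_mkcond [X in _ + X = _]big_mkcond [X in _ = X + _]big_mkcond.
  rewrite [X in _ = _ + (X + _)]big_mkcond [X in _ = _ + (_ + X)]big_mkcond.
  rewrite -[X in _ = _ + X]big_split -[X in _ = X]big_split -[X in X = _]big_split /=.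
  apply: eq_bigr => m _.
  rewrite /a01 /a10 /a00.
  case: (eqVneq (F1 m X) 0) => h1 /=; case: (eqVneq (F2 m X) 0) => h2 /=;
    rewrite ?h2 ?ltxx /= ?addr0 ?add0r //.
  by case: (0 < F2 m X); rewrite ?addr0 ?add0r.
- move=> j hj.
  apply: (closed_cvg (fun y : R => 0 <= y) (@closed_ge R 0) _ _ (Hcoef _ (memG j hj))).
  by apply: nearW => l; have [Hmu _] := H6 l; exact: (Hmu j).1.
- move=> m hm.
  case: (eqVneq (cbf (inr (inr (inl m)))) 0) => [->|r1n]; [by left | right].
  apply: (closed_cvg (fun y : R => y <= 0) (@closed_le R 0) _ _ (Hcoef _ (memQ m hm))).
  near=> l.
  have CPn : CP l m != 0 by near: l; exact: (cvgr_neq0 _ (Hcoef _ (memP m hm)) r1n).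
  have [_ [Hal [Hbe [Hga _]]]] := H6 l.
  have [_ [_ Hfm]] := feasl l.
  have [_ [_ F2ge]] := Hfm m.
  have [al0 alE] := Hal m; have [be0 beE] := Hbe m; have [_ gaE] := Hga m.
  move: CPn; rewrite /CP /nu mulf_eq0 negb_or => /andP[nun F2n].
  have F2pos : 0 < F2 m (x l) by rewrite lt_def F2n F2ge.
  have ga0 : ga l m = 0 by move/eqP: gaE; rewrite mulf_eq0 (negbTE F2n) orbF => /eqP.
  rewrite /= /CQ /nu ga0 addr0.
  have tp := tpos l.
  have key : (be l m - al l m) * F1 m (x l) * F2 m (x l) <= 0 by nra.
  nra.
Unshelve. all: by end_near.
Qed.

End Aux.

Theorem mainTheorem10 (R : realType) (n p q k : nat)
  (f : 'rV[R]_n -> R) (h : 'I_p -> 'rV[R]_n -> R)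
  (g : 'I_q -> 'rV[R]_n -> R) (F1 F2 : 'I_k -> 'rV[R]_n -> R)
  (Cf : C2 f) (Ch : forall i, C2 (h i)) (Cg : forall j, C2 (g j))
  (CF1 : forall m, C2 (F1 m)) (CF2 : forall m, C2 (F2 m))
  (t : nat -> R) (x : nat -> 'rV[R]_n) (xbar : 'rV[R]_n) :
  (forall l, 0 < t l) ->
  t @ \oo --> (0 : R) ->
  (forall l, KKT_t f h g F1 F2 (t l) (x l)) ->
  x @ \oo --> xbar ->
  feasM h g F1 F2 xbar ->
  LICQ h g F1 F2 xbar ->
  Tstationary f h g F1 F2 xbar.
Proof.
move=> tpos _ KKT Hx feas licq.
exact: (main_aux R n p q k f h g F1 F2 Cf Ch Cg CF1 CF2 t x xbar tpos KKT Hx feas licq).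
Qed.
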